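(* Let $\mathcal{T}$ be a finite tree, $w:V(\mathcal{T})\to\mathbb{R}_{\ge0}$, and $m=w(\mathcal{T})$. Then (i) for every $\alpha\in(0,1)$: $\displaystyle \mathtt{cent}^\alpha(\mathcal{T},w)\le\frac{1}{1-\alpha}\mathtt{OPT}(\mathcal{T},w)-\frac{\alpha}{1-\alpha}m$; (ii) for every $\alpha\in[\tfrac13,\tfrac12]$: $\displaystyle \mathtt{cent}^\alpha(\mathcal{T},w)\le\frac{1}{2-3\alpha}\mathtt{OPT}(\mathcal{T},w)-\frac{3\alpha-1}{2-3\alpha}m$.
   Context: For a subgraph $\mathcal{H}$ of $\mathcal{T}$, $w(\mathcal{H})=\sum_{x\in V(\mathcal{H})}w(x)$. A search tree on a tree $\mathcal{T}$ is a rooted tree $T$ with vertex set $V(\mathcal{T})$ defined recursively: its root is an arbitrary vertex $r$, and the children of $r$ are the roots of search trees built on the connected components of $\mathcal{T}-r$; a single-vertex tree has only itself as search tree. $\mathtt{cost}_w(T)=\sum_x w(x)\,\mathtt{depth}_T(x)$ with root depth $1$; $\mathtt{OPT}(\mathcal{T},w)$ is the minimum cost over all search trees on $\mathcal{T}$. For $0\le\alpha\le1$, a vertex $v$ is an $\alpha$-centroid of $(\mathcal{T},w)$ if every component $\mathcal{H}$ of $\mathcal{T}-v$ has $w(\mathcal{H})\le\alpha\, w(\mathcal{T})$. A search tree $T$ is an $\alpha$-centroid tree if every vertex $x$ is an $\alpha$-centroid of $(\mathcal{T}[V(T_x)],w)$, where $T_x$ is the subtree of $T$ rooted at $x$. $\mathtt{cent}^\alpha(\mathcal{T},w)$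 is the maximum cost of an $\alpha$-centroid tree of $(\mathcal{T},w)$, or $0$ if none exists. *)

(* Defs.v *)
From HB Require Import structures.
From mathcomp Require Import all_boot all_order all_algebra.
From mathcomp Require Import boolp reals.
Set Implicit Arguments. Unset Strict Implicit. Unset Printing Implicit Defensive.
Import Order.TTheory GRing.Theory Num.Theory.
Local Open Scope ring_scope.

Definition has_cycle (V : finType) (e : rel V) : Prop :=
  exists (x : V) (p : seq V),
    [/\ 2 <= size p, uniq (x :: p), path e x p & e (last x p) x]%N.

Definition is_tree (V : finType) (e : rel V) : Prop :=
  [/\ (0 < #|V|)%N, symmetric e, irreflexive e,
      (forall x y : V, connect e x y) & ~ has_cycle e].

Definition restr (V : finType) (e : rel V) (S : {set V}) : rel V :=
  [rel x y | [&& x \in S, y \in S & e x y]].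

Definition comp (V : finType) (e : rel V) (S : {set V}) (x : V) : {set V} :=
  [set y in S | connect (restr e S) x y].

Definition is_component (V : finType) (e : rel V) (S C : {set V}) : Prop :=
  exists2 x, x \in S & C = comp e S x.

Definition wset (V : finType) (R : realType) (w : V -> R) (S : {set V}) : R :=
  \sum_(x in S) w x.

Inductive stree (V : Type) := Node of V & seq (stree V).

Fixpoint vset (V : finType) (t : stree V) : {set V} :=
  match t with
  | Node r ts =>
      r |: (fix vs (ts : seq (stree V)) : {set V} :=
              match ts with [::] => finset.set0 | c :: ts' => vset c :|: vs ts' end) ts
  end.

Fixpoint is_stree (V : finType) (e : rel V) (S : {set V}) (t : stree V) : Prop :=
  match t with
  | Node r ts =>
      [/\ r \in S,
          uniq [seq vset c | c <- ts],
          (forall C, C \in [seq vset c | c <- ts] <-> is_component e (S :\ r) C)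
        & (fix all_st (ts : seq (stree V)) : Prop :=
             match ts with
             | [::] => True
             | c :: ts' => is_stree e (vset c) c /\ all_st ts'
             end) ts]
  end.

Definition search_tree (V : finType) (e : rel V) (t : stree V) : Prop :=
  is_stree e [set: V] t.

Fixpoint cost_at (V : finType) (R : realType) (w : V -> R) (d : nat) (t : stree V) : R :=
  match t with
  | Node r ts =>
      w r * d%:R +
      (fix cs (ts : seq (stree V)) : R :=
         match ts with [::] => 0 | c :: ts' => cost_at w d.+1 c + cs ts' end) ts
  end.

Definition cost (V : finType) (R : realType) (w : V -> R) (t : stree V) : R :=
  cost_at w 1 t.

(* OPT(T,w): minimum cost of a search tree (as an infimum over the finitely
   many search trees). *)
Definition OPT (V : finType) (e : rel V) (R : realType) (w : V -> R) : R :=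
  inf (fun c : R => exists t, search_tree e t /\ c = cost w t).

Definition is_centroid (V : finType) (e : rel V) (R : realType) (w : V -> R)
    (alpha : R) (S : {set V}) (v : V) : Prop :=
  forall C, is_component e (S :\ v) C -> wset w C <= alpha * wset w S.

Fixpoint is_cent_tree (V : finType) (e : rel V) (R : realType) (w : V -> R)
    (alpha : R) (t : stree V) : Prop :=
  match t with
  | Node r ts =>
      is_centroid e w alpha (vset t) r /\
      (fix all_c (ts : seq (stree V)) : Prop :=
         match ts with
         | [::] => True
         | c :: ts' => is_cent_tree e w alpha c /\ all_c ts'
         end) ts
  end.

Definition cent (V : finType) (e : rel V) (R : realType) (w : V -> R) (alpha : R) : R :=
  let P := fun c : R => exists t, [/\ search_tree e t, is_cent_tree e w alpha t & c = cost w t] in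
  if `[< exists c, P c >] then sup P else 0.

(* Main.v *)
Require Import Defs.
From HB Require Import structures.
From mathcomp Require Import all_boot all_order all_algebra.
From mathcomp Require Import boolp reals.
From mathcomp Require Import ring lra.
Import Order.TTheory GRing.Theory Num.Theory.
Local Open Scope ring_scope.
Set Implicit Arguments. Unset Strict Implicit. Unset Printing Implicit Defensive.

Definition stree_ind2 (V : Type) (P : stree V -> Prop)
  (H : forall r ts, (forall c, List.In c ts -> P c) -> P (Node r ts)) : forall t, P t :=
  fix F t := match t with
  | Node r ts => H r ts ((fix G (ts : seq (stree V)) : forall c, List.In c ts -> P c :=
       match ts with
       | [::] => fun c f => False_ind _ f
       | c0 :: ts' => fun c h => match h with
                                 | or_introl E => eq_ind c0 P (F c0) c E
                                 | or_intror h' => G ts' c h' end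
       end) ts)
  end.

Definition vsl (V : finType) := fix vs (ts : seq (stree V)) : {set V} :=
  match ts with [::] => finset.set0 | c :: ts' => vset c :|: vs ts' end.
Lemma vset_Node (V : finType) r (ts : seq (stree V)) : vset (Node r ts) = r |: vsl ts.
Proof. by []. Qed.
Lemma vslE (V : finType) (ts : seq (stree V)) : vsl ts = \bigcup_(c <- ts) vset c.
Proof. by elim: ts => [|c ts IH]; rewrite ?big_nil ?big_cons //= IH. Qed.

Definition all_st (V : finType) (e : rel V) := fix all_st (ts : seq (stree V)) : Prop :=
  match ts with [::] => True | c :: ts' => is_stree e (vset c) c /\ all_st ts' end.
Lemma is_stree_Node (V : finType) (e : rel V) S r ts :
  is_stree e S (Node r ts) =
  [/\ r \in S, uniq [seq vset c | c <- ts],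
      (forall C, C \in [seq vset c | c <- ts] <-> is_component e (S :\ r) C)
    & all_st e ts].
Proof. by []. Qed.
Lemma all_stE (V : finType) (e : rel V) ts :
  all_st e ts <-> forall c, List.In c ts -> is_stree e (vset c) c.
Proof.
elim: ts => [|c ts IH] /=; first by split.
rewrite IH; split; first by case=> H1 H2 c' [<-|]; [|apply: H2].
by move=> H; split=> [|c' ?]; apply: H; [left|right].
Qed.

Definition all_ct (V : finType) (e : rel V) (R : realType) (w : V -> R) (alpha : R) :=
  fix all_c (ts : seq (stree V)) : Prop :=
         match ts with
         | [::] => True
         | c :: ts' => is_cent_tree e w alpha c /\ all_c ts'
         end.
Lemma is_cent_Node (V : finType) (e : rel V) (R : realType) (w : V -> R) alpha r ts :
  is_cent_tree e w alpha (Node r ts) =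
  (is_centroid e w alpha (vset (Node r ts)) r /\ all_ct e w alpha ts).
Proof. by []. Qed.
Lemma all_ctE (V : finType) (e : rel V) (R : realType) (w : V -> R) alpha ts :
  all_ct e w alpha ts <-> forall c, List.In c ts -> is_cent_tree e w alpha c.
Proof.
elim: ts => [|c ts IH] /=; first by split.
rewrite IH; split; first by case=> H1 H2 c' [<-|]; [|apply: H2].
by move=> H; split=> [|c' ?]; apply: H; [left|right].
Qed.

Definition csum (V : finType) (R : realType) (w : V -> R) (d : nat) :=
  fix cs (ts : seq (stree V)) : R :=
         match ts with [::] => 0 | c :: ts' => cost_at w d.+1 c + cs ts' end.
Lemma cost_at_Node (V : finType) (R : realType) (w : V -> R) d r ts :
  cost_at w d (Node r ts) = w r * d%:R + csum w d ts.
Proof. by []. Qed.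
Lemma csumE (V : finType) (R : realType) (w : V -> R) d ts :
  csum w d ts = \sum_(c <- ts) cost_at w d.+1 c.
Proof. by elim: ts => [|c ts IH]; rewrite ?big_nil ?big_cons //= IH. Qed.


Lemma restr_sym (V : finType) (e : rel V) (X : {set V}) : symmetric e -> symmetric (restr e X).
Proof. by move=> se x y; rewrite /restr /= se; case: (x \in X); case: (y \in X). Qed.

Lemma conn_sym (V : finType) (e : rel V) (X : {set V}) x y : symmetric e ->
  connect (restr e X) x y = connect (restr e X) y x.
Proof. by move=> se; apply: sym_connect_sym; apply: restr_sym. Qed.

Lemma conn_mono (V : finType) (e : rel V) (X Y : {set V}) x y : X \subset Y ->
  connect (restr e X) x y -> connect (restr e Y) x y.
Proof.
move=> sXY; apply: connect_sub => u v /= /and3P[uX vX euv].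
by apply: connect1; rewrite /restr /= (subsetP sXY _ uX) (subsetP sXY _ vX).
Qed.

Lemma path_restr_all (V : finType) (e : rel V) (X : {set V}) x p :
  path (restr e X) x p -> all (fun y => y \in X) p.
Proof. by elim: p x => //= y p IH x /andP[/and3P[_ -> _] /IH]. Qed.

Lemma path_restr_sub (V : finType) (e : rel V) (X Y : {set V}) x p :
  path (restr e X) x p -> x \in Y -> all (fun y => y \in Y) p -> path (restr e Y) x p.
Proof.
elim: p x => //= y p IH x /andP[/and3P[_ _ exy] pp] xY /andP[yY aY].
by rewrite {1}/restr /= xY yY exy /= IH.
Qed.

Lemma path_restr_e (V : finType) (e : rel V) (X : {set V}) x p :
  path (restr e X) x p -> path e x p.
Proof. by apply: sub_path => u v /and3P[]. Qed.

Definition compset (V : finType) (e : rel V) (X : {set V}) : {set {set V}} :=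
  equivalence_partition (connect (restr e X)) X.

Lemma comp_equiv (V : finType) (e : rel V) (X : {set V}) : symmetric e ->
  {in X & &, equivalence_rel (connect (restr e X))}.
Proof.
move=> se x y z _ _ _; split; first exact: connect0.
move=> cxy; apply/idP/idP => H; first by apply: connect_trans H; rewrite conn_sym.
exact: connect_trans cxy H.
Qed.

Lemma compset_partition (V : finType) (e : rel V) (X : {set V}) : symmetric e ->
  partition (compset e X) X.
Proof. by move=> se; apply: equivalence_partitionP; apply: comp_equiv. Qed.

Lemma is_componentP (V : finType) (e : rel V) (X : {set V}) C :
  is_component e X C <-> C \in compset e X.
Proof.
split; first by case=> x xX ->; apply/imsetP; exists x.
by case/imsetP=> x xX ->; exists x.
Qed.

Lemma comp_self (V : finType) (e : rel V) (X : {set V}) x : x \in X -> x \in Defs.comp e X x.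
Proof. by move=> xX; rewrite inE xX connect0. Qed.

Lemma comp_sub (V : finType) (e : rel V) (X : {set V}) x : Defs.comp e X x \subset X.
Proof. by apply/subsetP => y; rewrite inE => /andP[]. Qed.

Lemma comp_eq (V : finType) (e : rel V) (X : {set V}) x y : symmetric e ->
  y \in Defs.comp e X x -> Defs.comp e X y = Defs.comp e X x.
Proof.
move=> se; rewrite inE => /andP[yX cxy]; apply/setP => z; rewrite !inE.
case: (z \in X) => //=; apply/idP/idP => H; first exact: connect_trans cxy H.
by apply: connect_trans H; rewrite conn_sym.
Qed.

Lemma comp_conn (V : finType) (e : rel V) (X : {set V}) x y :
  x \in X -> connect (restr e X) x y -> connect (restr e (Defs.comp e X x)) x y.
Proof.
move=> xX /connectP[p pp ->]; apply/connectP; exists p => //.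
have xC := comp_self e xX.
have key : forall u q, u \in Defs.comp e X x -> path (restr e X) u q ->
    path (restr e (Defs.comp e X x)) u q.
  move=> u q; elim: q u => //= v q IH u uC /andP[/and3P[uX vX euv] pp'].
  have vC : v \in Defs.comp e X x.
    move: uC; rewrite !inE vX => /andP[_ cxu]; apply: connect_trans cxu _.
    by apply: connect1; rewrite /restr /= uX vX.
  by rewrite {1}/restr /= uC vC euv /= IH.
exact: key.
Qed.

Lemma comp_disj (V : finType) (e : rel V) (X : {set V}) C C' : symmetric e ->
  is_component e X C -> is_component e X C' -> C != C' -> [disjoint C & C'].
Proof.
move=> se [x _ ->] [y _ ->] ne; apply/pred0P => z /=; apply/negbTE/negP => /andP[zx zy].
by move: ne; rewrite -(comp_eq se zx) -(comp_eq se zy) eqxx.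
Qed.

Lemma no_cycle2 (V : finType) (e : rel V) t a b : is_tree e ->
  e t a -> e t b -> a != b -> connect (restr e (~: [set t])) a b -> False.
Proof.
case=> _ se ie _ nc eta etb nab /connectP[p pp lp].
case: (shortenP pp) lp => p' pp' up' _ lp'.
apply: nc; exists t, (a :: p'); split.
- case: p' pp' up' lp' => [|??] //= _ _ lp'; by rewrite -lp' eqxx in nab.
- rewrite cons_uniq up' andbT; apply/negP; rewrite inE => /orP[/eqP ta|tp'].
    by rewrite -ta ie in eta.
  by move: (path_restr_all pp') => /allP/(_ _ tp'); rewrite !inE eqxx.
- by rewrite /= eta (path_restr_e pp').
- by rewrite /= -lp' se.
Qed.
Lemma conn_restr_comp (V : finType) (e : rel V) (Y Z : {set V}) x r : symmetric e ->
  Y \subset Z -> r \in Y -> connect (restr e Y) x r ->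
  connect (restr e (Y :&: Defs.comp e Z r)) x r.
Proof.
move=> se sYZ rY cxr; rewrite conn_sym //.
have := comp_conn rY (etrans (conn_sym _ _ _ se) cxr); apply: conn_mono.
apply/subsetP => y; rewrite !inE => /andP[yY cry].
by rewrite yY (subsetP sYZ _ yY) (conn_mono sYZ cry).
Qed.

Lemma all_notin (V : finType) (t : V) (s : seq V) :
  t \notin s -> all (fun y => y \in ~: [set t]) s.
Proof.
move=> ts; apply/allP => y ys; rewrite !inE; apply/negP => /eqP yt.
by rewrite -yt ys in ts.
Qed.

Lemma path_conn (V : finType) (e : rel V) (X : {set V}) x p :
  path (restr e X) x p -> connect (restr e X) x (last x p).
Proof. by move=> pp; apply/connectP; exists p. Qed.

Lemma inv_Dr (V : finType) (e : rel V) (A S : {set V}) t r x : is_tree e ->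
  A \subset S -> r \in A -> r != t -> x \in A ->
  x \in Defs.comp e (S :\ t) r -> connect (restr e A) x r ->
  connect (restr e (A :&: Defs.comp e (S :\ t) r)) x r.
Proof.
move=> Ht sAS rA rt xA xD /connectP[p pp lp].
have se : symmetric e by case: Ht.
case: (shortenP pp) lp => p' pp' up' _ lp'.
case: (boolP (t \in x :: p')) => [tin|tout].
  exfalso; move: tin; rewrite inE => /orP[/eqP tx|tp'].
    by move: xD; rewrite -tx !inE eqxx.
  case/splitPr: tp' pp' up' lp' => p1 p2.
  rewrite cat_path last_cat /= => /andP[pp1 /andP[ea pp2]] up lp.
  case: p2 pp2 up lp => [|b p2]; first by move=> _ _ /= rt'; rewrite rt' eqxx in rt.
  move=> /andP[etb pp2] up lp.
  have up2 : uniq ((x :: p1) ++ t :: b :: p2) := up.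
  change (is_true (path (restr e A) b p2)) in pp2.
  move: up2; rewrite cat_uniq => /and3P[_ hs ut].
  have tx1 : t \notin x :: p1 by apply: contra hs => H; apply/hasP; exists t; rewrite ?inE ?eqxx.
  have bx1 : b \notin x :: p1.
    by apply: contra hs => H; apply/hasP; exists b; rewrite ?inE ?eqxx ?orbT.
  have tb2 : t \notin b :: p2 by move: ut; rewrite cons_uniq => /andP[].
  have nab : last x p1 != b.
    by apply: contra bx1 => /eqP <-; apply: mem_last.
  have c1 : connect (restr e (~: [set t])) x (last x p1).
    apply: path_conn; apply: path_restr_sub pp1 _ _.
      by move: tx1; rewrite !inE => /norP[/negP tx _]; apply/negP => /eqP xt; apply: tx; rewrite xt.
    by move: tx1; rewrite inE negb_or => /andP[_ /all_notin].
  have c2 : connect (restr e (~: [set t])) r x.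
    move: xD; rewrite inE => /andP[_]; apply: conn_mono.
    by apply/subsetP => y; rewrite !inE => /andP[].
  have c3 : connect (restr e (~: [set t])) b r.
    rewrite lp; apply: path_conn; apply: path_restr_sub pp2 _ _.
      by move: tb2; rewrite inE negb_or => /andP[tb _]; rewrite !inE eq_sym.
    by move: tb2; rewrite inE negb_or => /andP[_ /all_notin].
  apply: (@no_cycle2 _ e t _ _ Ht _ _ nab).
  - by move: ea; rewrite /restr /= => /and3P[_ _]; rewrite se.
  - by move: etb; rewrite /restr /= => /and3P[_ _].
  rewrite conn_sym // in c1; rewrite conn_sym // in c2.
  by apply: connect_trans c1 _; apply: connect_trans c2 _; rewrite conn_sym.
have xt : x != t by apply: contra tout => /eqP ->; apply: mem_head.
have aP := allP (path_restr_all pp').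
have pA : path (restr e (A :\ t)) x p'.
  apply: path_restr_sub pp' _ _; first by rewrite !inE xt xA.
  apply/allP => y yp; rewrite !inE (aP y yp) andbT.
  by apply: contra tout => /eqP <-; rewrite inE yp orbT.
have cA : connect (restr e (A :\ t)) x r by rewrite lp'; apply: path_conn.
have := conn_restr_comp se (setSD _ sAS) _ cA.
rewrite !inE rt rA => /(_ isT); apply: conn_mono.
by apply: setSI; apply: subD1set.
Qed.

Lemma clos (V : finType) (e : rel V) (A S : {set V}) t r x : symmetric e ->
  A \subset S -> x \in A -> t \in A -> t != r ->
  x \notin Defs.comp e (S :\ t) r -> connect (restr e A) x r ->
  connect (restr e (A :\ r)) x t.
Proof.
move=> se sAS xA tA tr xD /connectP[p pp lp].
case: (shortenP pp) lp => p' pp' up' _ lp'.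
case: (boolP (t \in x :: p')) => [tin|tout].
  move: tin; rewrite inE => /orP[/eqP ->|tp']; first exact: connect0.
  case/splitPr: tp' pp' up' lp' => p1 p2.
  rewrite cat_path last_cat /= => /andP[pp1 /andP[ea pp2]] up lp.
  have up2 : uniq ((x :: p1) ++ t :: p2) := up.
  move: up2; rewrite cat_uniq => /and3P[_ hs _].
  have rx1 : r \notin x :: p1.
    apply: contra hs => H; apply/hasP; exists r => //.
    by rewrite lp; apply: mem_last.
  have : path (restr e A) x (rcons p1 t) by rewrite rcons_path pp1.
  move/path_restr_sub => /(_ (A :\ r)).
  have xr : x != r by apply: contra rx1 => /eqP ->; apply: mem_head.
  rewrite !inE xr xA => /(_ isT) H.
  have := path_conn (H _); rewrite last_rcons; apply.
  apply/allP => y; rewrite mem_rcons inE => /orP[/eqP ->|yp1]; first by rewrite !inE tr tA.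
  rewrite !inE (allP (path_restr_all pp1) y yp1) andbT.
  by apply: contra rx1 => /eqP <-; rewrite inE yp1 orbT.
have aP := allP (path_restr_all pp').
exfalso; move: xD; rewrite inE => /negP; apply.
have xt : x != t by apply: contra tout => /eqP ->; apply: mem_head.
rewrite !inE xt (subsetP sAS _ xA) /=.
rewrite conn_sym // lp'; apply: path_conn; apply: path_restr_sub pp' _ _.
  by rewrite !inE xt (subsetP sAS _ xA).
apply/allP => y yp; rewrite !inE (subsetP sAS _ (aP y yp)) andbT.
by apply: contra tout => /eqP <-; rewrite inE yp orbT.
Qed.


Definition gcost (V : finType) (R : realType) (w : V -> R) (A : {set V}) : stree V -> R :=
  fix g t := match t with
  | Node r ts => (if r \in A then wset w (A :&: vset t) else 0) +
      (fix gs (ts : seq (stree V)) : R := match ts with [::] => 0 | c :: ts' => g c + gs ts' end) ts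
  end.

Definition gsum (V : finType) (R : realType) (w : V -> R) (A : {set V}) :=
  fix gs (ts : seq (stree V)) : R := match ts with [::] => 0 | c :: ts' => gcost w A c + gs ts' end.

Lemma gcost_Node (V : finType) (R : realType) (w : V -> R) A r ts :
  gcost w A (Node r ts) =
  (if r \in A then wset w (A :&: vset (Node r ts)) else 0) + \sum_(c <- ts) gcost w A c.
Proof.
have -> : \sum_(c <- ts) gcost w A c = gsum w A ts.
  by elim: ts => [|c ts IH]; rewrite ?big_nil ?big_cons //= IH.
by [].
Qed.

Lemma wset_ge0 (V : finType) (R : realType) (w : V -> R) X :
  (forall x, 0 <= w x) -> 0 <= wset w X.
Proof. by move=> Hw; apply: sumr_ge0 => x _. Qed.

Lemma wset_mono (V : finType) (R : realType) (w : V -> R) (X Y : {set V}) :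
  (forall x, 0 <= w x) -> X \subset Y -> wset w X <= wset w Y.
Proof.
move=> Hw sXY; rewrite /wset (bigID (fun x => x \in X) (fun x => x \in Y)) /=.
have -> : \sum_(i in Y | i \in X) w i = \sum_(i in X) w i.
  by apply: eq_bigl => i; case iX: (i \in X); rewrite ?andbF ?andbT // (subsetP sXY _ iX).
by rewrite lerDl; apply: sumr_ge0.
Qed.

Lemma wset1 (V : finType) (R : realType) (w : V -> R) (X : {set V}) x :
  x \in X -> wset w X = w x + wset w (X :\ x).
Proof. by move=> xX; rewrite /wset (big_setD1 x xX). Qed.

Lemma vset_sub (V : finType) (c : stree V) r ts :
  List.In c ts -> vset c \subset vset (Node r ts).
Proof.
rewrite vset_Node vslE => H; apply: subsetU; apply/orP; right.
elim: ts H => //= c' ts IH [->|H]; rewrite big_cons; first exact: subsetUl.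
by apply: subset_trans (IH H) _; apply: subsetUr.
Qed.

Lemma sum_In_eq (T : Type) (R : realType) (ts : seq T) (F G : T -> R) :
  (forall c, List.In c ts -> F c = G c) -> \sum_(c <- ts) F c = \sum_(c <- ts) G c.
Proof.
elim: ts => [|c ts IH] H; rewrite ?big_nil ?big_cons // H; last by left.
by rewrite IH // => c' H'; apply: H; right.
Qed.

Lemma sum_In_le (T : Type) (R : realType) (ts : seq T) (F G : T -> R) :
  (forall c, List.In c ts -> F c <= G c) -> \sum_(c <- ts) F c <= \sum_(c <- ts) G c.
Proof.
elim: ts => [|c ts IH] H; rewrite ?big_nil ?big_cons // lerD //; first by apply: H; left.
by apply: IH => c' H'; apply: H; right.
Qed.

Lemma sum_In_ge0 (T : Type) (R : realType) (ts : seq T) (F : T -> R) :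
  (forall c, List.In c ts -> 0 <= F c) -> 0 <= \sum_(c <- ts) F c.
Proof.
elim: ts => [|c ts IH] H; rewrite ?big_nil ?big_cons // addr_ge0 //; first by apply: H; left.
by apply: IH => c' H'; apply: H; right.
Qed.

Lemma sum_In_one (T : Type) (R : realType) (ts : seq T) (F : T -> R) c0 :
  (forall c, List.In c ts -> 0 <= F c) -> List.In c0 ts -> F c0 <= \sum_(c <- ts) F c.
Proof.
elim: ts => [|c ts IH] H //= [E|I]; rewrite big_cons.
  by rewrite E lerDl; apply: sum_In_ge0 => c' H'; apply: H; right.
apply: (le_trans (IH _ I)); first by move=> c' H'; apply: H; right.
by rewrite lerDr; apply: H; left.
Qed.

Lemma gcost_cap (V : finType) (R : realType) (w : V -> R) A t :
  gcost w A t = gcost w (A :&: vset t) t.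
Proof.
elim/stree_ind2: t A => r ts IH A; rewrite !gcost_Node.
have rV : r \in vset (Node r ts) by rewrite vset_Node setU11.
rewrite inE rV andbT -setIA setIid; congr (_ + _).
apply: sum_In_eq => c H; rewrite (IH c H A) (IH c H (A :&: vset (Node r ts))) -setIA.
by rewrite (setIidPr (vset_sub r H)).
Qed.

Lemma gcost_ge0 (V : finType) (R : realType) (w : V -> R) A t :
  (forall x, 0 <= w x) -> 0 <= gcost w A t.
Proof.
move=> Hw; elim/stree_ind2: t => r ts IH; rewrite gcost_Node addr_ge0 //.
  by case: ifP => _ //; apply: wset_ge0.
exact: sum_In_ge0.
Qed.

Definition pdisj (V : finType) (F : seq {set V}) :=
  pairwise (fun K K' : {set V} => [disjoint K & K']) F.

Lemma atmost1 (V : finType) (R : realType) (F : seq {set V}) (f : {set V} -> R) r b :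
  pdisj F -> (forall K, K \in F -> 0 <= f K <= b) -> 0 <= b ->
  \sum_(K <- F) (if r \in K then f K else 0) <= b.
Proof.
elim: F => [|K F IH]; rewrite ?big_nil ?big_cons // /pdisj pairwise_cons.
move=> /andP[dK pF] Hf b0; case rK: (r \in K).
  rewrite big1_seq ?addr0; first by case/andP: (Hf K (mem_head _ _)).
  move=> K' /andP[_ K'F]; move/allP: dK => /(_ K' K'F) dKK'.
  by rewrite (disjointFr dKK' rK).
by rewrite add0r; apply: IH => // K' K'F; apply: Hf; rewrite inE K'F orbT.
Qed.

Lemma gcost_sup (V : finType) (R : realType) (w : V -> R) (A : {set V}) (F : seq {set V}) t :
  (forall x, 0 <= w x) -> pdisj F -> (forall K, K \in F -> K \subset A) ->
  \sum_(K <- F) gcost w K t <= gcost w A t.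
Proof.
move=> Hw pF sF; elim/stree_ind2: t => r ts IH.
rewrite gcost_Node; under eq_bigr => K _ do rewrite gcost_Node.
rewrite big_split /= exchange_big /=; apply: lerD; last exact: sum_In_le.
case rA: (r \in A).
  apply: atmost1 => //; last exact: wset_ge0.
  move=> K KF; rewrite wset_ge0 //=; apply: wset_mono => //.
  by apply: setSI; apply: sF.
rewrite big1_seq // => K /andP[_ KF]; case: ifP => // rK.
by rewrite (subsetP (sF K KF) _ rK) in rA.
Qed.


Lemma list_comp_big (V : finType) (e : rel V) (X : {set V}) (T : Type) (idx : T)
   (op : Monoid.com_law idx) (ts : seq (stree V)) (F : {set V} -> T) :
  uniq [seq vset c | c <- ts] ->
  (forall C, C \in [seq vset c | c <- ts] <-> is_component e X C) ->
  \big[op/idx]_(c <- ts) F (vset c) = \big[op/idx]_(C in compset e X) F C.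
Proof.
move=> u H; rewrite -(big_map (@vset V) xpredT) big_uniq //; apply: eq_bigl => C.
by apply/idP/idP => [/H/is_componentP|/is_componentP/H].
Qed.

Lemma vset_stree (V : finType) (e : rel V) S t : symmetric e ->
  is_stree e S t -> vset t = S.
Proof.
case: t => r ts se; rewrite is_stree_Node => -[rS u H _].
rewrite vset_Node vslE (@list_comp_big _ e (S :\ r) _ set0 (@setU V) ts (fun C => C) u H).
have /and3P[/eqP cov _ _] := compset_partition (S :\ r) se.
by rewrite -[in RHS](setD1K rS) -[in RHS]cov.
Qed.

Lemma wsum_children (V : finType) (e : rel V) (R : realType) (w : V -> R) S r ts :
  symmetric e -> is_stree e S (Node r ts) ->
  \sum_(c <- ts) wset w (vset c) = wset w (S :\ r).
Proof.
move=> se; rewrite is_stree_Node => -[rS u H _].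
rewrite (@list_comp_big _ e (S :\ r) _ 0 +%R ts (wset w) u H).
have /and3P[/eqP cov tI _] := compset_partition (S :\ r) se.
by rewrite /wset -[in RHS]cov big_trivIset.
Qed.

Lemma child_stree (V : finType) (e : rel V) S r ts c :
  is_stree e S (Node r ts) -> List.In c ts -> is_stree e (vset c) c.
Proof. by rewrite is_stree_Node => -[_ _ _ /all_stE H] /H. Qed.

Lemma cost_gcost (V : finType) (e : rel V) (R : realType) (w : V -> R) t :
  symmetric e -> forall S d, is_stree e S t ->
  cost_at w d t = (d%:R - 1) * wset w S + gcost w setT t.
Proof.
move=> se; elim/stree_ind2: t => r ts IH S d Ht.
have rS : r \in S by move: Ht; rewrite is_stree_Node => -[].
rewrite cost_at_Node csumE gcost_Node inE setTI (vset_stree se Ht).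
rewrite (sum_In_eq (G := fun c => d%:R * wset w (vset c) + gcost w setT c)); last first.
  by move=> c H; rewrite (IH c H (vset c) d.+1 (child_stree Ht H)) -addn1 natrD addrK.
rewrite big_split /= -mulr_sumr (wsum_children w se Ht) (wset1 w rS).
ring.
Qed.


Lemma mapIn (T : Type) (U : eqType) (f : T -> U) (s : seq T) y :
  y \in map f s -> exists c, List.In c s /\ y = f c.
Proof.
elim: s => //= c s IH; rewrite inE => /orP[/eqP ->|/IH [c' [H ->]]].
  by exists c; split; [left|].
by exists c'; split; [right|].
Qed.

Lemma in_In (T : eqType) (s : seq T) x : x \in s -> List.In x s.
Proof. by elim: s => //= y s IH; rewrite inE => /orP[/eqP ->|/IH]; [left|right]. Qed.

Lemma wsetU (V : finType) (R : realType) (w : V -> R) (X Y : {set V}) :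
  (forall x, 0 <= w x) -> wset w (X :|: Y) <= wset w X + wset w Y.
Proof.
move=> Hw; rewrite {1}/wset (bigID (fun x => x \in X)) /=; apply: lerD.
  have -> : \sum_(i in X :|: Y | i \in X) w i = wset w X.
    by rewrite /wset; apply: eq_bigl => x; rewrite inE; case: (x \in X); case: (x \in Y).
  exact: lexx.
have -> : \sum_(i in X :|: Y | i \notin X) w i = wset w (Y :\: X).
  by apply: eq_bigl => x; rewrite !inE; case: (x \in X); case: (x \in Y).
by apply: wset_mono => //; apply: subsetDl.
Qed.

Lemma Dnode (V : finType) (e : rel V) (R : realType) (w : V -> R) (S A : {set V}) (F : seq {set V}) t ts :
  symmetric e -> is_stree e S (Node t ts) -> A \subset S -> (forall K, K \in F -> K \subset A) ->
  gcost w A (Node t ts) - \sum_(K <- F) gcost w K (Node t ts) =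
  ((if t \in A then wset w A else 0) - \sum_(K <- F) (if t \in K then wset w K else 0)) +
  \sum_(c <- ts) (gcost w A c - \sum_(K <- F) gcost w K c).
Proof.
move=> se Ht sAS sF; rewrite gcost_Node (vset_stree se Ht) (setIidPl sAS).
rewrite (eq_big_seq (fun K : {set V} => (if t \in K then wset w K else 0) + \sum_(c <- ts) gcost w K c)); last first.
  move=> K KF; rewrite gcost_Node (vset_stree se Ht) (setIidPl (subset_trans (sF K KF) sAS)) //.
rewrite big_split /= exchange_big /= sumrB; ring.
Qed.

Lemma keyT (V : finType) (e : rel V) (R : realType) (w : V -> R) (be : R) T :
  is_tree e -> (forall x, 0 <= w x) -> 0 <= be ->
  forall (S A : {set V}) r (F : seq {set V}),
  is_stree e S T -> A \subset S -> r \in A ->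
  (forall x, x \in A -> connect (restr e A) x r) ->
  pdisj F -> (forall K, K \in F -> K \subset A :\ r) ->
  (forall K, K \in F -> wset w K <= be) ->
  (forall K x y, K \in F -> x \in K -> y \in A :\ r ->
     connect (restr e (A :\ r)) x y -> y \in K) ->
  [/\ w r <= gcost w A T - \sum_(K <- F) gcost w K T,
      (forall b, b <= wset w A -> b <= wset w A - be + w r ->
         b <= gcost w A T - \sum_(K <- F) gcost w K T) &
      (forall b, b <= 2 * wset w A - 2 * be -> b <= 2 * wset w A - 3 * be + w r ->
         b <= wset w A -> b <= gcost w A T - \sum_(K <- F) gcost w K T)].
Proof.
move=> Htr Hw b0; have se : symmetric e by case: Htr.
elim/stree_ind2: T => t ts IH S A r F Ht sAS rA Inv pF sF wF clF.
have sFA : forall K, K \in F -> K \subset A.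
  by move=> K KF; apply: subset_trans (sF K KF) _; apply: subD1set.
rewrite (Dnode w se Ht sAS sFA).
have WAr : w r <= wset w A by rewrite (wset1 w rA) lerDl wset_ge0.
have WA0 : 0 <= wset w A by apply: wset_ge0.
have cnn : forall c, List.In c ts -> 0 <= gcost w A c - \sum_(K <- F) gcost w K c.
  by move=> c _; rewrite subr_ge0; apply: gcost_sup.
set s := \sum_(K <- F) (if t \in K then wset w K else 0).
have s0 : 0 <= s by apply: sumr_ge0 => K _; case: ifP => _ //; apply: wset_ge0.
have sb : s <= be.
  by apply: atmost1 => // K KF; rewrite wset_ge0 // wF.
have sA : s <= wset w A.
  by apply: atmost1 => // K KF; rewrite wset_ge0 //= wset_mono // sFA.
case: (eqVneq t r) => [tr|tr].
  have s00 : s = 0.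
    rewrite /s big1_seq // => K /andP[_ KF]; rewrite tr; case: ifP => // rK.
    by have := subsetP (sF K KF) r rK; rewrite !inE eqxx.
  rewrite s00 tr rA subr0.
  have := sum_In_ge0 cnn.
  set Q := \sum_(c <- ts) _ => Q0.
  split; first by clear -Q0 WAr; lra.
    by move=> b h1 h2; clear -Q0 h1; lra.
  by move=> b h1 h2 h3; clear -Q0 h3; lra.
have rt : r != t by rewrite eq_sym.
have rSt : r \in S :\ t by rewrite !inE rt (subsetP sAS _ rA).
set D := Defs.comp e (S :\ t) r.
have [cr [crin crD]] : exists c, List.In c ts /\ D = vset c.
  apply: mapIn; move: Ht; rewrite is_stree_Node => -[_ _ H _]; apply/H; by exists r.
have Htc := child_stree Ht crin; rewrite -crD in Htc.
have rD : r \in D := comp_self e rSt.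
set A' := A :&: D.
set F' := map (fun K => K :&: D) F.
have eqc : gcost w A cr - \sum_(K <- F) gcost w K cr =
           gcost w A' cr - \sum_(K <- F') gcost w K cr.
  rewrite big_map (gcost_cap w A cr) -crD; congr (_ - _).
  by apply: eq_bigr => K _; rewrite (gcost_cap w K cr) -crD.
have rA' : r \in A' by rewrite inE rA rD.
have Inv' : forall x, x \in A' -> connect (restr e A') x r.
  move=> x; rewrite inE => /andP[xA xD].
  exact: (inv_Dr Htr sAS rA rt xA xD (Inv x xA)).
have pF' : pdisj F'.
  rewrite /pdisj /F' pairwise_map; apply: sub_pairwise pF => K K' /= d.
  exact: disjointWl (subsetIl _ _) (disjointWr (subsetIl _ _) d).
have sF' : forall K, K \in F' -> K \subset A' :\ r.
  move=> K' /mapP[K KF ->]; apply/subsetP => x; rewrite !inE => /andP[xK xD].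
  have := subsetP (sF K KF) x xK; rewrite !inE => /andP[-> ->].
  by rewrite xD.
have wF' : forall K, K \in F' -> wset w K <= be.
  move=> K' /mapP[K KF ->]; apply: le_trans (wF K KF); apply: wset_mono => //.
  exact: subsetIl.
have clF' : forall K x y, K \in F' -> x \in K -> y \in A' :\ r ->
     connect (restr e (A' :\ r)) x y -> y \in K.
  move=> K' x y /mapP[K KF ->]; rewrite inE => /andP[xK _] yA' cxy.
  have yD : y \in D by move: yA'; rewrite !inE => /and3P[].
  rewrite inE yD andbT; apply: (clF K x y KF xK).
    by move: yA'; rewrite !inE => /and3P[-> ->].
  by apply: conn_mono cxy; apply: setSD; apply: subsetIl.
have [IHa IHb IHc] := IH cr crin D A' r F' Htc (subsetIr _ _) rA' Inv' pF' sF' wF' clF'.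
have chl : gcost w A' cr - \sum_(K <- F') gcost w K cr <=
           \sum_(c <- ts) (gcost w A c - \sum_(K <- F) gcost w K c).
  by rewrite -eqc; apply: (sum_In_one cnn crin).
move: IHa IHb IHc chl.
set Dv' := gcost w A' cr - \sum_(K <- F') gcost w K cr.
set Q := \sum_(c <- ts) _.
move=> IHa IHb IHc chl.
case tA: (t \in A).
  case: (boolP (has (fun K : {set V} => t \in K) F)) => [/hasP[K KF tK]|/hasPn hn].
    have sK : wset w K <= s.
      have := sum_In_one (F := fun K : {set V} => if t \in K then wset w K else 0) _ (in_In KF).
      by rewrite tK; apply => K' _; case: ifP => _ //; apply: wset_ge0.
    have WA' : wset w A <= wset w K + wset w A'.
      have h := wsetU (w:=w) K A' Hw; suff h' : wset w A <= wset w (K :|: A') by exact: le_trans h' h.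
      apply: wset_mono => //.
      apply/subsetP => x xA; rewrite inE; case xD: (x \in D).
        by rewrite /A' inE xA xD orbT.
      have xr : x != r by apply: contraFneq xD => ->.
      have cxt := clos se sAS xA tA tr (negbT xD) (Inv x xA).
      have tAr : t \in A :\ r by rewrite !inE tr tA.
      rewrite (clF K t x KF tK) //; first by rewrite !inE xr xA.
      by rewrite conn_sym.
    split; first by clear -IHa chl sA; lra.
      by move=> b h1 h2; clear -IHa chl sb h2; lra.
    move=> b h1 h2 h3.
    have h4 : b - wset w A + s <= wset w A' by clear -h1 sb sK WA'; lra.
    have h5 : b - wset w A + s <= wset w A' - be + w r by clear -h2 sb sK WA'; lra.
    have h := IHb _ h4 h5; clear -h chl; lra.
  have s00 : s = 0.
    rewrite /s big1_seq // => K /andP[_ KF]; case: ifP => // tK.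
    by have := hn K KF; rewrite tK.
  rewrite s00; split; first by clear -IHa chl WA0; lra.
    by move=> b h1 h2; have wr0 := Hw r; clear -IHa chl WA0 h1 wr0; lra.
  by move=> b h1 h2 h3; have wr0 := Hw r; clear -IHa chl WA0 h3 wr0; lra.
have s00 : s = 0.
  rewrite /s big1_seq // => K /andP[_ KF]; case: ifP => // tK.
  by have := subsetP (sFA K KF) t tK; rewrite tA.
have AD : A' = A.
  apply/setIidPl/subsetP => x xA; rewrite inE.
  have xt : x != t by apply: contraTneq xA => ->; rewrite tA.
  rewrite !inE xt (subsetP sAS _ xA) /= conn_sym //.
  apply: conn_mono (Inv x xA); apply/subsetP => y yA.
  have yt : y != t by apply: contraTneq yA => ->; rewrite tA.
  by rewrite !inE yt (subsetP sAS _ yA).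
rewrite AD in IHb IHc; rewrite s00.
split; first by clear -IHa chl WA0; lra.
  move=> b h1 h2; have h := IHb b h1 h2; clear -h chl; lra.
move=> b h1 h2 h3; have h := IHc b h1 h2 h3; clear -h chl; lra.
Qed.


Lemma comps_pdisj (V : finType) (e : rel V) (X : {set V}) (L : seq {set V}) :
  symmetric e -> uniq L -> (forall C, C \in L -> is_component e X C) -> pdisj L.
Proof.
move=> se; elim: L => [|C L IH] //= /andP[CL uL] H.
rewrite /pdisj /=; apply/andP; split; last first.
  by apply: IH => // C' C'L; apply: H; rewrite inE C'L orbT.
apply/allP => C' C'L; apply: (comp_disj se (H C (mem_head _ _))).
  by apply: H; rewrite inE C'L orbT.
by apply: contraNneq CL => ->.
Qed.

Lemma In_map (T : Type) (U : eqType) (f : T -> U) (s : seq T) c :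
  List.In c s -> f c \in map f s.
Proof. by elim: s => //= c' s IH [->|/IH H]; rewrite inE ?eqxx ?H ?orbT. Qed.

Lemma comp_connected (V : finType) (e : rel V) (X C : {set V}) : symmetric e ->
  is_component e X C -> forall x y, x \in C -> y \in C -> connect (restr e C) x y.
Proof.
move=> se [z zX ->] x y; rewrite !inE => /andP[_ czx] /andP[_ czy].
have h1 := comp_conn zX czx; have h2 := comp_conn zX czy.
by apply: connect_trans h2; rewrite conn_sym.
Qed.

Lemma keyC (V : finType) (e : rel V) (R : realType) (w : V -> R) (alpha p q : R) T0 :
  is_tree e -> (forall x, 0 <= w x) -> is_stree e setT T0 ->
  (forall (A : {set V}) r (F : seq {set V}),
     r \in A ->
     (forall x, x \in A -> connect (restr e A) x r) ->
     pdisj F -> (forall K, K \in F -> K \subset A :\ r) ->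
     (forall K, K \in F -> wset w K <= alpha * wset w A) ->
     (forall K x y, K \in F -> x \in K -> y \in A :\ r ->
        connect (restr e (A :\ r)) x y -> y \in K) ->
     p * wset w A + q * w r <= gcost w A T0 - \sum_(K <- F) gcost w K T0) ->
  forall C (A : {set V}), is_stree e A C -> is_cent_tree e w alpha C ->
  (forall x y, x \in A -> y \in A -> connect (restr e A) x y) ->
  p * gcost w setT C + q * wset w A <= gcost w A T0.
Proof.
move=> Htr Hw HT0 Hb; have se : symmetric e by case: Htr.
elim/stree_ind2 => r cs IH A HC Hcent Hconn.
have vC := vset_stree se HC.
have HC' := HC; move: HC'; rewrite is_stree_Node => -[rA u Hcomp _].
move: Hcent; rewrite is_cent_Node => -[Hcen /all_ctE Hch].
rewrite vC in Hcen.
set F := [seq vset c | c <- cs].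
have Fc : forall K, K \in F -> is_component e (A :\ r) K by move=> K /Hcomp.
have h1 : forall K, K \in F -> K \subset A :\ r.
  by move=> K /Fc [z _ ->]; apply: comp_sub.
have h2 : forall K, K \in F -> wset w K <= alpha * wset w A.
  by move=> K /Fc; apply: Hcen.
have h3 : forall K x y, K \in F -> x \in K -> y \in A :\ r ->
        connect (restr e (A :\ r)) x y -> y \in K.
  move=> K x y /Fc [z zX ->]; rewrite !inE => /andP[_ czx] yA cxy.
  by rewrite yA /=; apply: connect_trans czx cxy.
have HD := Hb A r F rA (fun x xA => Hconn x r xA rA) (comps_pdisj se u Fc) h1 h2 h3.
have HS : \sum_(c <- cs) (p * gcost w setT c + q * wset w (vset c)) <=
          \sum_(K <- F) gcost w K T0.
  rewrite big_map; apply: sum_In_le => c cin; apply: IH => //.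
    exact: child_stree HC cin.
  - by apply: Hch.
  by apply: (comp_connected se); apply/Hcomp; apply: In_map.
have eqg : gcost w A T0 = (gcost w A T0 - \sum_(K <- F) gcost w K T0) + \sum_(K <- F) gcost w K T0.
  by rewrite subrK.
rewrite eqg gcost_Node inE setTI vset_Node -vset_Node vC.
move: HS; rewrite big_split /= -mulr_sumr -mulr_sumr (wsum_children w se HC) => HS.
move: HD HS; rewrite (wset1 w rA) !mulrDr; lra.
Qed.


Lemma build_list (V : finType) (e : rel V) (L : seq {set V}) : symmetric e ->
  (forall C, C \in L -> exists t, is_stree e C t) ->
  exists ts, map (@vset V) ts = L /\ all_st e ts.
Proof.
move=> se; elim: L => [|C L IH] H; first by exists [::].
have [t Ht] := H C (mem_head _ _).
have [ts [mts ats]] : exists ts, map (@vset V) ts = L /\ all_st e ts.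
  by apply: IH => C' C'L; apply: H; rewrite inE C'L orbT.
exists (t :: ts); split; first by rewrite /= mts (vset_stree se Ht).
by split => //; rewrite (vset_stree se Ht).
Qed.

Lemma exists_stree (V : finType) (e : rel V) : symmetric e ->
  forall n (S : {set V}), (#|S| <= n)%N -> S != set0 -> exists t, is_stree e S t.
Proof.
move=> se; elim=> [|n IH] S cS nS.
  by move: nS; rewrite -card_gt0; case: #|S| cS.
have [r rS] := set0Pn _ nS.
set L := enum (compset e (S :\ r)).
have HL : forall C, C \in L -> exists t, is_stree e C t.
  move=> C; rewrite mem_enum => CP; apply: IH.
    have sC : C \subset S :\ r by have [z _ ->] := (is_componentP _ _ _).2 CP; apply: comp_sub.
    have := subset_leq_card sC; rewrite (cardsD1 r S) rS add1n in cS.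
    move=> h; apply: leq_trans h _; by [].
  exact: partition_neq0 (compset_partition _ se) CP.
have [ts [mts ats]] := build_list se HL.
exists (Node r ts); rewrite is_stree_Node; split => //.
  by rewrite mts enum_uniq.
by move=> C; rewrite mts mem_enum is_componentP.
Qed.

Lemma final_gen (V : finType) (e : rel V) (R : realType) (w : V -> R) (alpha p q : R) :
  is_tree e -> (forall x, 0 <= w x) -> 0 < p -> q <= 1 ->
  (forall T0, search_tree e T0 ->
   forall (A : {set V}) r (F : seq {set V}),
     r \in A ->
     (forall x, x \in A -> connect (restr e A) x r) ->
     pdisj F -> (forall K, K \in F -> K \subset A :\ r) ->
     (forall K, K \in F -> wset w K <= alpha * wset w A) ->
     (forall K x y, K \in F -> x \in K -> y \in A :\ r ->
        connect (restr e (A :\ r)) x y -> y \in K) ->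
     p * wset w A + q * w r <= gcost w A T0 - \sum_(K <- F) gcost w K T0) ->
  cent e w alpha <= p^-1 * OPT e w - q / p * wset w [set: V].
Proof.
move=> Htr Hw p0 q1 Hb; have se : symmetric e by case: Htr.
set m := wset w [set: V].
have m0 : 0 <= m by apply: wset_ge0.
have [T1 HT1] : exists T, search_tree e T.
  apply: (exists_stree se (n := #|V|)); first by rewrite cardsT.
  by apply/set0Pn; case: Htr => /card_gt0P [x _] _ _ _ _; exists x; rewrite inE.
have costg : forall T, search_tree e T -> cost w T = gcost w setT T.
  by move=> T HT; rewrite /cost (cost_gcost w se 1 HT) subrr mul0r add0r.
have costm : forall T, search_tree e T -> m <= cost w T.
  move=> T HT; rewrite costg //; case: T HT => r ts HT.
  rewrite gcost_Node inE setTI (vset_stree se HT) lerDl.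
  by apply: sum_In_ge0 => c _; apply: gcost_ge0.
have OPTlb : forall b, (forall T, search_tree e T -> b <= cost w T) -> b <= OPT e w.
  move=> b H; apply: lb_le_inf; first by exists (cost w T1), T1.
  by move=> y [T [HT ->]]; apply: H.
have OPTm : m <= OPT e w by apply: OPTlb.
have connT : forall x y, x \in [set: V] -> y \in [set: V] -> connect (restr e [set: V]) x y.
  move=> x y _ _; case: Htr => _ _ _ Hc _; apply: conn_mono (subsetT [set: V]) _.
  rewrite (eq_connect (e' := e)) ?Hc // => u v; by rewrite /restr /= !inE.
have main : forall C, search_tree e C -> is_cent_tree e w alpha C ->
    p * cost w C + q * m <= OPT e w.
  move=> C HC Hcent; apply: OPTlb => T HT.
  rewrite costg // costg //.
  exact: (keyC Htr Hw HT (Hb T HT) HC Hcent connT).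
have pinv : 0 < p^-1 by rewrite invr_gt0.
have RHS : p^-1 * OPT e w - q / p * m = p^-1 * (OPT e w - q * m).
  by rewrite mulrBr mulrA [p^-1 * q]mulrC.
rewrite /cent /= RHS; case: asboolP => [ex|nex].
  apply: ge_sup => //; move=> y [C [HC Hcent ->]].
  rewrite -(mulKf (lt0r_neq0 p0) (cost w C)); apply: ler_wpM2l; first exact: ltW.
  by have := main C HC Hcent; lra.
apply: mulr_ge0; first exact: ltW.
have : q * m <= m by rewrite -[X in _ <= X]mul1r; apply: ler_wpM2r.
lra.
Qed.

Unset Implicit Arguments.

Theorem theorem7 (V : finType) (e : rel V) (R : realType) (w : V -> R)
    (Htree : is_tree e) (Hw : forall x, 0 <= w x) :
  let m := wset w [set: V] in
  (forall alpha : R, 0 < alpha < 1 ->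
     cent e w alpha <= (1 - alpha)^-1 * OPT e w - alpha / (1 - alpha) * m) /\
  (forall alpha : R, 3^-1 <= alpha <= 2^-1 ->
     cent e w alpha <= (2 - 3 * alpha)^-1 * OPT e w
                       - (3 * alpha - 1) / (2 - 3 * alpha) * m).
Proof.
move=> m; split=> alpha /andP[a1 a2].
  apply: final_gen => //; try lra.
  move=> T0 HT0 A r F rA Inv pF sF wF clF.
  have WA0 : 0 <= wset w A by apply: wset_ge0.
  have WAr : w r <= wset w A by rewrite (wset1 w rA) lerDl wset_ge0.
  have be0 : 0 <= alpha * wset w A by apply: mulr_ge0 => //; lra.
  have [_ Kb _] := keyT Htree Hw be0 HT0 (subsetT A) rA Inv pF sF wF clF.
  have wr0 := Hw r.
  apply: Kb; nra.
have a0 : 0 < alpha.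
  by apply: lt_le_trans a1; rewrite invr_gt0.
have h3 : 1 <= 3 * alpha by lra.
have h2 : 2 * alpha <= 1 by lra.
apply: final_gen => //; try lra.
move=> T0 HT0 A r F rA Inv pF sF wF clF.
have WA0 : 0 <= wset w A by apply: wset_ge0.
have WAr : w r <= wset w A by rewrite (wset1 w rA) lerDl wset_ge0.
have be0 : 0 <= alpha * wset w A by apply: mulr_ge0 => //; lra.
have [_ _ Kc] := keyT Htree Hw be0 HT0 (subsetT A) rA Inv pF sF wF clF.
have wr0 := Hw r.
apply: Kc; nra.
Qed.
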